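(* Let $\beta$ be a real root of an irreducible quadratic polynomial with integer coefficients, and let $\beta'$ denote its other root (conjugate). Then $p_\beta(\alpha) < \infty$ for every $\alpha \in \mathbb{R}$ if and only if at least one of $\beta$ and $\beta'$ is greater than $1$.
   Context: For $\beta, \alpha \in \mathbb{C}$, the partition function $p_\beta(\alpha) \in \mathbb{Z}_{\geq 0} \cup \{\infty\}$ is the number of polynomials $f(x) \in \mathbb{Z}_{\geq 0}[x]$ (polynomials with non-negative integer coefficients) such that $f(\beta) = \alpha$, i.e. the number of ways to write $\alpha = a_j\beta^j + \dots + a_1\beta + a_0$ with non-negative integers $a_i$; it may be infinite. *)

(* Defs.v *)
From HB Require Import structures.
From mathcomp Require Import all_boot all_order all_algebra.
From mathcomp Require Import all_classical all_reals.
Set Implicit Arguments. Unset Strict Implicit. Unset Printing Implicit Defensive.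
Import Order.TTheory GRing.Theory Num.Theory.
Local Open Scope ring_scope.

Definition nonneg_poly (f : {poly int}) : Prop := forall i : nat, 0 <= f`_i.

Definition evalR (R : realType) (f : {poly int}) (x : R) : R :=
  (map_poly (fun z : int => z%:~R) f).[x].

(* p_beta(alpha) < oo : the set of f in Z_{>=0}[x] with f(beta) = alpha is
   finite, i.e. contained in some finite list. *)
Definition partition_finite (R : realType) (beta alpha : R) : Prop :=
  exists s : seq {poly int},
    forall f : {poly int}, nonneg_poly f -> evalR f beta = alpha -> f \in s.

(* Main.v *)
Require Import Defs.
From HB Require Import structures.
From mathcomp Require Import all_boot all_order all_algebra.
From mathcomp Require Import all_classical all_reals.
From mathcomp Require Import ring lra zify.
Import Order.TTheory GRing.Theory Num.Theory.
Local Open Scope ring_scope.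

Section Basic.
Variable R : realType.
Implicit Types (x : R) (p : {poly int}).
Lemma evalR_D p q x : evalR (p + q) x = evalR p x + evalR q x.
Proof. by rewrite /evalR rmorphD hornerD. Qed.
Lemma evalR_M p q x : evalR (p * q) x = evalR p x * evalR q x.
Proof. by rewrite /evalR rmorphM hornerM. Qed.
Lemma evalR_B p q x : evalR (p - q) x = evalR p x - evalR q x.
Proof. by rewrite /evalR rmorphB hornerD hornerN. Qed.
Lemma evalR_N p x : evalR (- p) x = - evalR p x.
Proof. by rewrite /evalR rmorphN hornerN. Qed.
Lemma evalR_X x : evalR 'X x = x.
Proof. by rewrite /evalR map_polyX hornerX. Qed.
Lemma evalR_Xn n x : evalR 'X^n x = x ^+ n.
Proof. by rewrite /evalR map_polyXn hornerXn. Qed.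
Lemma evalR_C c x : evalR c%:P x = c%:~R.
Proof. by rewrite /evalR map_polyC hornerC. Qed.
Lemma evalR_1 x : evalR 1 x = 1.
Proof. by rewrite -polyC1 evalR_C. Qed.
End Basic.

Lemma nonneg_D p q : nonneg_poly p -> nonneg_poly q -> nonneg_poly (p + q).
Proof. by move=> hp hq i; rewrite coefD addr_ge0. Qed.
Lemma nonneg_M p q : nonneg_poly p -> nonneg_poly q -> nonneg_poly (p * q).
Proof.
move=> hp hq i; rewrite coefM; apply: sumr_ge0 => j _; exact: mulr_ge0.
Qed.
Lemma nonneg_C c : 0 <= c -> nonneg_poly c%:P.
Proof. by move=> hc i; rewrite coefC; case: eqP. Qed.
Lemma nonneg_Xn n : nonneg_poly 'X^n.
Proof. by move=> i; rewrite coefXn; case: eqP. Qed.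
Lemma nonneg_0 : nonneg_poly 0.
Proof. by move=> i; rewrite coef0. Qed.

Section Family.
Variable R : realType.
Lemma size_step {p H : {poly int}} {j} : nonneg_poly p -> nonneg_poly H -> p != 0 -> (0 < j)%N ->
  (size p < size ('X^j * p + H)%R)%N.
Proof.
move=> hp hH p0 j0.
have lp : 0 < p`_(size p).-1.
  rewrite lt_def hp andbT; rewrite -lead_coefE lead_coef_eq0 //.
have hc : ('X^j * p + H)`_((size p).-1 + j) != 0.
  rewrite coefD coefXnM ltnNge leq_addl /= addnK.
  by rewrite gt_eqF // ltr_wpDr.
have := hc; apply: contraR; rewrite -leqNgt => hs.
apply/eqP; apply: nth_default; apply: leq_trans hs _.
by move: j0; case: (size p) => [|n] /=; lia.
Qed.

Lemma infinite_family (b : R) (G H : {poly int}) (j : nat) :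
  nonneg_poly G -> nonneg_poly H -> G != 0 -> (0 < j)%N ->
  evalR G b = b ^+ j * evalR G b + evalR H b ->
  ~ partition_finite b (evalR G b).
Proof.
move=> hG hH G0 j0 heq [s hs].
pose f n := iter n (fun p => 'X^j * p + H) G.
have hf : forall n, [/\ nonneg_poly (f n), evalR (f n) b = evalR G b & (n < size (f n))%N].
  elim=> [|n [h1 h2 h3]] /=.
    by split=> //; rewrite size_poly_gt0.
  have fn0 : f n != 0 by rewrite -size_poly_gt0; apply: leq_ltn_trans h3.
  split.
  - by apply: nonneg_D => //; apply: nonneg_M => //; apply: nonneg_Xn.
  - by rewrite evalR_D evalR_M evalR_Xn h2 -heq.
  - have := size_step h1 hH fn0 j0; move=> hh; apply: leq_ltn_trans h3 hh.
pose m := \max_(p <- s) size p.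
have [h1 h2 h3] := hf m.
have hin := hs _ h1 h2.
have := @leq_bigmax_seq _ s xpredT (fun p : {poly int} => size p) _ hin isT.
by rewrite -/m leqNgt h3.
Qed.
End Family.

Lemma horner3 (F : numFieldType) (q : {poly int}) (x : F) : size q = 3%N ->
  (map_poly (fun z : int => z%:~R) q : {poly F}).[x] =
  (q`_0)%:~R + (q`_1)%:~R * x + (q`_2)%:~R * x ^+ 2.
Proof.
move=> sq.
have sm : size (map_poly (fun z : int => z%:~R) q : {poly F}) = 3%N.
  rewrite size_map_poly_id0 // intr_eq0 lead_coef_eq0 -size_poly_eq0 sq //.
rewrite horner_coef sm !big_ord_recl big_ord0 !coef_map /=.
by rewrite expr0 mulr1 expr1 addr0 addrA.
Qed.

Lemma q2_neq0 (q : {poly int}) : size q = 3%N -> q`_2 != 0.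
Proof.
by move=> sq; have := lead_coef_eq0 q; rewrite lead_coefE sq /= => ->; rewrite -size_poly_eq0 sq.
Qed.

Section Coord.
Variable R : realType.
Variable q : {poly int}.
Hypothesis sq : size q = 3%N.

Lemma coordP (Y : {poly int}) : exists e u v : int, e != 0 /\
  forall g : R, evalR q g = 0 -> e%:~R * evalR Y g = u%:~R + v%:~R * g.
Proof.
elim/poly_ind: Y => [|p c [e [u [v [e0 he]]]]].
  exists 1, 0, 0; split; first by []. by move=> g _; rewrite /evalR rmorph0 horner0 mulr0 mul0r addr0.
exists (q`_2 * e), (q`_2 * e * c - v * q`_0), (q`_2 * u - v * q`_1); split.
  by rewrite mulf_neq0 // q2_neq0.
move=> g hg; have hp := he g hg; rewrite /evalR horner3 // in hg.
rewrite evalR_D evalR_M evalR_X evalR_C.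
rewrite !intrD !intrM ?intrB ?intrM ?intrN.
set P := evalR p g in hp *.
apply/eqP; rewrite -subr_eq0; apply/eqP.
transitivity ((q`_2)%:~R * g * (e%:~R * P - u%:~R - v%:~R * g) +
   v%:~R * ((q`_0)%:~R + (q`_1)%:~R * g + (q`_2)%:~R * g ^+ 2) : R).
  ring.
by rewrite hg hp; ring.
Qed.

Lemma irrat (b : R) (u v : int) :
  irreducible_poly (map_poly (fun z : int => z%:~R) q : {poly rat}) ->
  evalR q b = 0 -> u%:~R + v%:~R * b = 0 -> u = 0 /\ v = 0.
Proof.
move=> hirr hb huv.
have [v0|v0] := eqVneq v 0.
  by move: huv; rewrite v0 mul0r addr0 => /eqP; rewrite intr_eq0 => /eqP.
exfalso.
rewrite /evalR horner3 // in hb.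
have N0 : q`_0 * v ^+ 2 - q`_1 * u * v + q`_2 * u ^+ 2 = 0.
  apply/eqP; rewrite -(intr_eq0 R); apply/eqP.
  rewrite !(intrD, intrM, intrB, intrN, rmorphXn).
  transitivity ((v%:~R) ^+ 2 * ((q`_0)%:~R + (q`_1)%:~R * b + (q`_2)%:~R * b ^+ 2)
     + ((q`_2)%:~R * (u%:~R - v%:~R * b) - (q`_1)%:~R * v%:~R) * (u%:~R + v%:~R * b) : R).
    ring.
  by rewrite hb huv; ring.
pose t : rat := - u%:~R / v%:~R.
have vq : (v%:~R : rat) != 0 by rewrite intr_eq0.
have rt : root (map_poly (fun z : int => z%:~R) q : {poly rat}) t.
  rewrite /root horner3 //.
  have : ((v%:~R : rat) ^+ 2 * ((q`_0)%:~R + (q`_1)%:~R * t + (q`_2)%:~R * t ^+ 2)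
     = (q`_0 * v ^+ 2 - q`_1 * u * v + q`_2 * u ^+ 2)%:~R).
    rewrite /t !(intrD, intrM, intrB, intrN, rmorphXn). field. exact: vq.
  rewrite N0 => /eqP; rewrite mulf_eq0 expf_eq0 /= (negbTE vq) /= => ->. done.
have := hirr.2 ('X - t%:P); rewrite size_XsubC -root_factor_theorem => /(_ isT rt).
move/eqp_size; rewrite size_XsubC size_map_poly_id0 ?sq //.
by rewrite intr_eq0 lead_coef_eq0 -size_poly_eq0 sq.
Qed.
End Coord.

Section Transfer.
Variable R : realType.
Variable q : {poly int}.
Hypothesis sq : size q = 3%N.
Hypothesis hirr : irreducible_poly (map_poly (fun z : int => z%:~R) q : {poly rat}).

Lemma transfer (b b' : R) (F F0 : {poly int}) : evalR q b = 0 -> evalR q b' = 0 ->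
  evalR F b = evalR F0 b -> evalR F b' = evalR F0 b'.
Proof.
move=> hb hb' hF.
have [e [u [v [e0 he]]]] := @coordP R q sq (F - F0).
have := he b hb; rewrite evalR_B hF subrr mulr0 => /esym /(@irrat R q sq b u v hirr hb) [u0 v0].
have := he b' hb'; rewrite u0 v0 mul0r addr0 evalR_B => /eqP.
by rewrite mulf_eq0 intr_eq0 (negbTE e0) /= subr_eq0 => /eqP.
Qed.
End Transfer.

Section Finite.
Variable R : realType.

Lemma bernoulli (g : R) (d : nat) : 1 <= g -> 1 + d%:R * (g - 1) <= g ^+ d.
Proof.
move=> g1; elim: d => [|d ih]; first by rewrite mul0r addr0 expr0.
rewrite exprS -natr1.
have h0 : 0 <= g - 1 by rewrite subr_ge0.
have h1 : 0 <= d%:R * (g - 1) by rewrite mulr_ge0.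
have : g * (1 + d%:R * (g - 1)) <= g * g ^+ d by rewrite ler_wpM2l // (le_trans ler01).
apply: le_trans.
nra.
Qed.

Lemma evalR_sum (F : {poly int}) (g : R) :
  evalR F g = \sum_(i < size F) (F`_i)%:~R * g ^+ i.
Proof.
rewrite /evalR (@horner_coef_wide _ (size F)); last first.
  by rewrite map_polyE; apply: leq_trans (size_Poly _) _; rewrite size_map.
by apply: eq_bigr => i _; rewrite coef_map.
Qed.

Lemma term_le (F : {poly int}) (g : R) i : nonneg_poly F -> 0 <= g ->
  (F`_i)%:~R * g ^+ i <= evalR F g.
Proof.
move=> hF g0; rewrite evalR_sum.
have hterm : forall j, 0 <= (F`_j)%:~R * g ^+ j :> R.
  by move=> j; rewrite mulr_ge0 ?exprn_ge0 // ler0z.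
have [hi|hi] := ltnP i (size F).
  rewrite (bigD1 (Ordinal hi)) //= lerDl; apply: sumr_ge0 => j _; exact: hterm.
by rewrite nth_default // mul0r; apply: sumr_ge0 => j _; exact: hterm.
Qed.

Lemma finite_gt1 (g C : R) : 1 < g -> exists s : seq {poly int},
  forall F : {poly int}, nonneg_poly F -> evalR F g = C -> F \in s.
Proof.
move=> g1.
have g0 : 0 <= g by rewrite (le_trans ler01) // ltW.
have gm1 : 0 < g - 1 by rewrite subr_gt0.
pose N := Num.bound (`|C| / (g - 1)).
pose M := Num.bound `|C|.
have hN := @archi_boundP _ (`|C| / (g - 1)) (divr_ge0 (normr_ge0 _) (ltW gm1)).
have hM := @archi_boundP _ `|C| (normr_ge0 _).
exists [seq \poly_(i < N) ((odflt 0%N (omap (fun k : 'I_N => val (f k)) (insub i)))%:Z) | f : {ffun 'I_N -> 'I_M.+1} <- enum {ffun 'I_N -> 'I_M.+1}].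
move=> F hF hC.
have C0 : 0 <= C by rewrite -hC evalR_sum; apply: sumr_ge0 => j _; rewrite mulr_ge0 ?exprn_ge0 // ler0z.
have nC : `|C| = C by rewrite ger0_norm.
have cb : forall i, (absz (F`_i)%R < M)%N.
  move=> i; rewrite -(ltr_nat R); apply: le_lt_trans hM; rewrite nC.
  have := @term_le F g i hF g0; rewrite hC; apply: le_trans.
  rewrite -[X in X <= _]mulr1 natr_absz ger0_norm ?ler0z //.
  by rewrite ler_wpM2l ?ler0z // exprn_ege1 // ltW.
have sb : (size F <= N)%N.
  have [->|F0] := eqVneq F 0; first by rewrite size_poly0.
  have sF : (0 < size F)%N by rewrite size_poly_gt0.
  have ld : 1 <= F`_(size F).-1.
    have : F`_(size F).-1 != 0 by rewrite -lead_coefE lead_coef_eq0.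
    have := hF (size F).-1; rewrite le_eqVlt eq_sym => /orP [/eqP->//|]. by [].
  have := @term_le F g (size F).-1 hF g0; rewrite hC => ht.
  have hb := @bernoulli g (size F).-1 (ltW g1).
  have gd : g ^+ (size F).-1 <= C.
    apply: le_trans ht; rewrite ler_peMl ?exprn_ge0 //.
    by rewrite ler1z.
  have : (size F).-1%:R < N%:R :> R.
    apply: lt_trans hN; rewrite ltr_pdivlMr // nC.
    apply: lt_le_trans gd; apply: lt_le_trans hb; rewrite ltrDr //.
  rewrite ltr_nat => hd.
  by rewrite -(prednK sF).
apply/mapP; exists [ffun i : 'I_N => inord (absz (F`_i))]; first by rewrite mem_enum.
apply/polyP => i; rewrite coef_poly; case: ltnP => hi.
  case: insubP => [k _ hk|]; last by rewrite hi.
  by rewrite /= ffunE /= inordK ?hk ?(ltn_trans (cb i)) // abszE ger0_norm.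
by rewrite nth_default // (leq_trans sb hi).
Qed.
End Finite.

Section Rep.
Variable R : realType.
Variable q : {poly int}.
Hypothesis sq : size q = 3%N.

Lemma rep (b1 b2 : R) (Y : {poly int}) (i1 i2 : nat) (lam mu : R) :
  evalR q b1 = 0 -> evalR q b2 = 0 -> b1 != b2 ->
  0 < lam -> 0 < mu ->
  evalR Y b1 = lam * b1 ^+ i1 + mu * b1 ^+ i2 ->
  evalR Y b2 = lam * b2 ^+ i1 + mu * b2 ^+ i2 ->
  b1 ^+ i1 * b2 ^+ i2 != b1 ^+ i2 * b2 ^+ i1 ->
  exists n c1 c2 : int, [/\ 0 < n, 0 < c1, 0 < c2 &
    forall g : R, evalR q g = 0 -> n%:~R * evalR Y g = c1%:~R * g ^+ i1 + c2%:~R * g ^+ i2].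
Proof.
move=> hb1 hb2 b12 l0 m0 hY1 hY2 hnd.
have [eY [u [v [eY0 hY]]]] := @coordP R q sq Y.
have [e1 [a1 [bb1 [e10 hW1]]]] := @coordP R q sq 'X^i1.
have [e2 [a2 [bb2 [e20 hW2]]]] := @coordP R q sq 'X^i2.
pose E := eY * e1 * e2.
pose U := e1 * e2 * u. pose V := e1 * e2 * v.
pose A1 := eY * e2 * a1. pose B1 := eY * e2 * bb1.
pose A2 := eY * e1 * a2. pose B2 := eY * e1 * bb2.
have E0 : E != 0 by rewrite !mulf_neq0.
have hE : forall g, evalR q g = 0 -> [/\ E%:~R * evalR Y g = U%:~R + V%:~R * g :> R,
    E%:~R * g ^+ i1 = A1%:~R + B1%:~R * g & E%:~R * g ^+ i2 = A2%:~R + B2%:~R * g].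
  move=> g hg; have := hY g hg; have := hW1 g hg; have := hW2 g hg.
  rewrite !evalR_Xn /E /U /V /A1 /B1 /A2 /B2 !intrM => h2 h1 h0; split.
  - transitivity (e1%:~R * e2%:~R * (eY%:~R * evalR Y g) : R); first ring.
    by rewrite h0; ring.
  - transitivity (eY%:~R * e2%:~R * (e1%:~R * g ^+ i1) : R); first ring.
    by rewrite h1; ring.
  - transitivity (eY%:~R * e1%:~R * (e2%:~R * g ^+ i2) : R); first ring.
    by rewrite h2; ring.
clearbody E U V A1 B1 A2 B2.
have [Y1 W11 W21] := hE b1 hb1.
have [Y2 W12 W22] := hE b2 hb2.
set Er := (E%:~R : R) in Y1 W11 W21 Y2 W12 W22.
set Ur := (U%:~R : R) in Y1 Y2. set Vr := (V%:~R : R) in Y1 Y2.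
set A1r := (A1%:~R : R) in W11 W12. set B1r := (B1%:~R : R) in W11 W12.
set A2r := (A2%:~R : R) in W21 W22. set B2r := (B2%:~R : R) in W21 W22.
set K := Ur - lam * A1r - mu * A2r. set D := Vr - lam * B1r - mu * B2r.
have k1 : K + D * b1 = 0.
  transitivity ((Ur + Vr * b1) - lam * (A1r + B1r * b1) - mu * (A2r + B2r * b1)); first by rewrite /K /D; ring.
  by rewrite -Y1 -W11 -W21 hY1; ring.
have k2 : K + D * b2 = 0.
  transitivity ((Ur + Vr * b2) - lam * (A1r + B1r * b2) - mu * (A2r + B2r * b2)); first by rewrite /K /D; ring.
  by rewrite -Y2 -W12 -W22 hY2; ring.
have D0 : D = 0.
  have : D * (b1 - b2) = 0.
    transitivity ((K + D * b1) - (K + D * b2)); first ring.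
    by rewrite k1 k2 subrr.
  move/eqP; rewrite mulf_eq0 (subr_eq0 b1 b2) (negbTE b12) orbF. by move/eqP.
have K0 : K = 0 by move: k1; rewrite D0 mul0r addr0.
have hU : Ur = lam * A1r + mu * A2r by apply/eqP; rewrite -subr_eq0 -K0 /K; apply/eqP; ring.
have hV : Vr = lam * B1r + mu * B2r by apply/eqP; rewrite -subr_eq0 -D0 /D; apply/eqP; ring.
pose Dl := A1 * B2 - A2 * B1.
pose C1 := U * B2 - V * A2. pose C2 := V * A1 - U * B1.
have hC1 : (C1%:~R : R) = lam * Dl%:~R.
  by rewrite /C1 /Dl !(intrB, intrM) -/Ur -/Vr -/A1r -/A2r -/B1r -/B2r hU hV; ring.
have hC2 : (C2%:~R : R) = mu * Dl%:~R.
  by rewrite /C2 /Dl !(intrB, intrM) -/Ur -/Vr -/A1r -/A2r -/B1r -/B2r hU hV; ring.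
have Dl0 : Dl != 0.
  apply: contra hnd => /eqP hD.
  have Er0 : Er != 0 by rewrite intr_eq0.
  have : Er ^+ 2 * (b1 ^+ i1 * b2 ^+ i2 - b1 ^+ i2 * b2 ^+ i1) = (Dl%:~R) * (b2 - b1).
    transitivity ((Er * b1 ^+ i1) * (Er * b2 ^+ i2) - (Er * b1 ^+ i2) * (Er * b2 ^+ i1)); first ring.
    by rewrite W11 W22 W21 W12 /Dl !(intrB, intrM) -/A1r -/A2r -/B1r -/B2r; ring.
  by rewrite hD mul0r => /eqP; rewrite mulf_eq0 expf_eq0 /= (negbTE Er0) subr_eq0.
have key : forall g, evalR q g = 0 ->
    (Dl%:~R : R) * evalR Y g = C1%:~R * g ^+ i1 + C2%:~R * g ^+ i2.
  move=> g hg; have [h0 h1 h2] := hE g hg.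
  have Er0 : Er != 0 by rewrite intr_eq0.
  apply: (mulfI Er0).
  transitivity (Dl%:~R * (Er * evalR Y g)); first ring.
  transitivity (C1%:~R * (Er * g ^+ i1) + C2%:~R * (Er * g ^+ i2)); last ring.
  rewrite h0 h1 h2 /Dl /C1 /C2 !(intrB, intrM) -/Ur -/Vr -/A1r -/A2r -/B1r -/B2r; ring.
have [hD|hD|hD] := ltgtP Dl 0; last by rewrite hD eqxx in Dl0.
- exists (- Dl), (- C1), (- C2); split.
  + by rewrite oppr_gt0.
  + by rewrite -(ltr0z R) intrN hC1 oppr_gt0 pmulr_rlt0 // ltrz0.
  + by rewrite -(ltr0z R) intrN hC2 oppr_gt0 pmulr_rlt0 // ltrz0.
  + by move=> g hg; rewrite !intrN mulNr key //; ring.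
- exists Dl, C1, C2; split => //.
  + by rewrite -(ltr0z R) hC1 mulr_gt0 // ltr0z.
  + by rewrite -(ltr0z R) hC2 mulr_gt0 // ltr0z.
Qed.
End Rep.

Section Cases.
Variable R : realType.
Variable q : {poly int}.
Hypothesis sq : size q = 3%N.

Lemma small_pow (r e : R) : 0 <= r -> r < 1 -> 0 < e -> exists a : nat, r ^+ a < e.
Proof.
move=> r0 r1 e0.
have [->|rn0] := eqVneq r 0; first by exists 1%N; rewrite expr1.
have rp : 0 < r by rewrite lt_def rn0.
pose g := r^-1.
have g1 : 1 < g by rewrite /g invf_gt1.
have gm1 : 0 < g - 1 by rewrite subr_gt0.
have x0 : 0 <= (e * (g - 1))^-1 by rewrite invr_ge0 ltW // mulr_gt0.
pose N := Num.bound (e * (g - 1))^-1.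
have hN := archi_boundP x0.
exists N.+1.
have hb := @bernoulli R g N.+1 (ltW g1).
have rg : r ^+ N.+1 * g ^+ N.+1 = 1 by rewrite -exprMn /g mulfV // expr1n.
have hN' : 1 < e * (g - 1) * N%:R.
  have hx : 0 < e * (g - 1) by rewrite mulr_gt0.
  have hxi : e * (g - 1) * (e * (g - 1))^-1 = 1 by rewrite mulfV // gt_eqF.
  by rewrite -{1}hxi ltr_pM2l.
have h2 : e * (1 + N.+1%:R * (g - 1)) <= e * g ^+ N.+1 by rewrite ler_wpM2l // ltW.
rewrite -natr1 in h2.
have h1 : 1 < e * g ^+ N.+1.
  apply: lt_le_trans h2; apply: lt_trans hN' _.
  have : 0 < e * g by rewrite mulr_gt0 // (lt_trans ltr01).
  move=> h; rewrite -subr_gt0; set z := e * g in h; nra.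
have rN : 0 < r ^+ N.+1 by rewrite exprn_gt0.
set u := r ^+ N.+1 in rg rN *. set w := g ^+ N.+1 in rg h1 *.
nra.
Qed.

Definition goodGH (b : R) := exists (G H : {poly int}) (j : nat),
  [/\ nonneg_poly G, nonneg_poly H, G != 0, (0 < j)%N &
      evalR G b = b ^+ j * evalR G b + evalR H b].

Lemma finish (b : R) (G0 : {poly int}) (j i1 i2 : nat) : evalR q b = 0 ->
  nonneg_poly G0 -> G0 != 0 -> (0 < j)%N ->
  (exists n c1 c2 : int, [/\ 0 < n, 0 < c1, 0 < c2 &
    forall g : R, evalR q g = 0 -> n%:~R * evalR (G0 * (1 - 'X^j)) g = c1%:~R * g ^+ i1 + c2%:~R * g ^+ i2]) ->
  goodGH b.
Proof.
move=> hb hG0 G00 j0 [n [c1 [c2 [n0 c10 c20 hid]]]].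
exists (n%:P * G0), (c1%:P * 'X^i1 + c2%:P * 'X^i2), j; split => //.
- by apply: nonneg_M => //; apply: nonneg_C; rewrite ltW.
- by apply: nonneg_D; apply: nonneg_M; (apply: nonneg_C; rewrite ltW) || apply: nonneg_Xn.
- by rewrite mulf_neq0 // polyC_eq0 gt_eqF.
have := hid b hb.
rewrite !(evalR_M, evalR_D, evalR_C, evalR_B, evalR_N, evalR_Xn, evalR_1) => h.
by rewrite -h; ring.
Qed.

Lemma case_bc (r s : R) : evalR q r = 0 -> evalR q s = 0 -> 0 < r -> r < 1 -> s < r ->
  s != 0 -> s ^+ 2 < r ^+ 2 -> forall b, evalR q b = 0 -> goodGH b.
Proof.
move=> hr hs r0 r1 sr s0 s2 b hb.
have t0 : 0 <= s ^+ 2 / r ^+ 2 by rewrite divr_ge0 // sqr_ge0.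
have t1 : s ^+ 2 / r ^+ 2 < 1 by rewrite ltr_pdivrMr ?exprn_gt0 // mul1r.
have e0 : 0 < (1 - r) / (1 - s) by rewrite divr_gt0 // subr_gt0 // (lt_trans sr).
have [a ha] := @small_pow _ _ t0 t1 e0.
pose P := r ^+ (2 * a). pose T := s ^+ (2 * a).
have P0 : 0 < P by rewrite exprn_gt0.
have T0 : 0 < T by rewrite /T exprM exprn_gt0 // lt_def sqrf_eq0 s0 /= sqr_ge0.
have hs1 : 0 < 1 - s by rewrite subr_gt0 (lt_trans sr).
have key : T * (1 - s) < P * (1 - r).
  move: ha; rewrite expr_div_n -!exprM ltr_pdivrMr ?exprn_gt0 // -/T -/P.
  by rewrite mulrAC ltr_pdivlMr // [P * _]mulrC.
have PT : 0 < P - T.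
  rewrite subr_gt0; have : T * (1 - s) < P * (1 - s).
    apply: lt_le_trans key _; rewrite ler_pM2l // lerD2l lerN2 ltW //.
  by rewrite ltr_pM2r.
pose mu := (P * (1 - r) - T * (1 - s)) / (P - T).
pose lam := P * ((1 - r) - mu).
apply: (@finish b ('X^(2 * a)) 1 0 (2 * a)) => //.
- exact: nonneg_Xn.
- by rewrite monic_neq0 // monicXn.
apply: (@rep R q sq r s _ 0 (2 * a) lam mu) => //.
- by rewrite gt_eqF.
- rewrite /lam mulr_gt0 // subr_gt0.
  rewrite /mu ltr_pdivrMr // -subr_gt0.
  have -> : (1 - r) * (P - T) - (P * (1 - r) - T * (1 - s)) = T * (r - s) by ring.
  by rewrite mulr_gt0 // subr_gt0.
- by rewrite /mu divr_gt0 // subr_gt0.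
- rewrite !(evalR_Xn, evalR_M, evalR_D, evalR_B, evalR_N, evalR_1, evalR_C, evalR_X) expr0 expr1 -/P /lam /mu.
  by field; rewrite gt_eqF.
- rewrite !(evalR_Xn, evalR_M, evalR_D, evalR_B, evalR_N, evalR_1, evalR_C, evalR_X) expr0 expr1 -/T /lam /mu.
  by field; rewrite gt_eqF.
- by rewrite !expr0 mul1r mulr1 -/P -/T eq_sym -subr_eq0 gt_eqF.
Qed.

Lemma case_d (r s : R) : evalR q r = 0 -> evalR q s = 0 -> 0 < r -> r < 1 -> s < r ->
  r ^+ 2 < s ^+ 2 -> forall b, evalR q b = 0 -> goodGH b.
Proof.
move=> hr hs r0 r1 sr s2 b hb.
have sn : s < 0.
  rewrite ltNge; apply/negP => s0'.
  move: s2; rewrite !expr2 => s2. nra.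
have s0 : s != 0 by rewrite lt_eqF.
have sp2 : 0 < s ^+ 2 by rewrite exprn_even_gt0.
have t0 : 0 <= r ^+ 2 / s ^+ 2 by rewrite divr_ge0 // sqr_ge0.
have t1 : r ^+ 2 / s ^+ 2 < 1 by rewrite ltr_pdivrMr // mul1r.
have hs1 : 0 < 1 - s by rewrite subr_gt0 (lt_trans sr).
have e0 : 0 < (1 - r) / (1 - s) by rewrite divr_gt0 // subr_gt0.
have [a ha] := @small_pow _ _ t0 t1 e0.
pose P := r ^+ (2 * a). pose T := s ^+ (2 * a).
have P0 : 0 < P by rewrite exprn_gt0.
have T0 : 0 < T by rewrite /T exprM exprn_gt0.
have key : P * (1 - s) < T * (1 - r).
  move: ha; rewrite expr_div_n -!exprM -/T -/P ltr_pdivrMr //.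
  by rewrite mulrAC ltr_pdivlMr // [T * _]mulrC.
have rs : 0 < r - s by rewrite subr_gt0.
have D0 : 0 < P * T * (r - s) by rewrite !mulr_gt0.
pose mu := ((1 - r) * T - (1 - s) * P) / (P * T * (r - s)).
pose lam := ((1 - s) * r * P - (1 - r) * s * T) / (P * T * (r - s)).
apply: (@finish b 1 1 (2 * a) (2 * a).+1) => //.
- by rewrite -polyC1; apply: nonneg_C.
- exact: oner_neq0.
apply: (@rep R q sq r s _ (2 * a) (2 * a).+1 lam mu) => //.
- by rewrite gt_eqF.
- rewrite /lam divr_gt0 // subr_gt0 (@lt_le_trans _ _ 0) //.
    by rewrite pmulr_llt0 // pmulr_rlt0 // subr_gt0.
  by rewrite !mulr_ge0 // ltW.
- by rewrite /mu divr_gt0 // subr_gt0 [_ * P]mulrC [_ * T]mulrC.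
- rewrite !(evalR_Xn, evalR_M, evalR_D, evalR_B, evalR_N, evalR_1, evalR_C, evalR_X) expr1 exprS -/P /lam /mu.
  by field; rewrite !gt_eqF.
- rewrite !(evalR_Xn, evalR_M, evalR_D, evalR_B, evalR_N, evalR_1, evalR_C, evalR_X) expr1 exprS -/T /lam /mu.
  by field; rewrite !gt_eqF.
- rewrite !exprS -/P -/T; apply/eqP => h.
  have : P * T * (s - r) = 0.
    by transitivity (P * (s * T) - r * P * T); [ring | rewrite h; ring].
  by move/eqP; rewrite !mulf_eq0 (gt_eqF P0) (gt_eqF T0) subr_eq0 (lt_eqF sr).
Qed.

Lemma case_e (r s : R) : evalR q r = 0 -> evalR q s = 0 -> 0 < r -> r < 1 -> s = - r ->
  forall b, evalR q b = 0 -> goodGH b.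
Proof.
move=> hr hs r0 r1 sr b hb.
have G0nn : nonneg_poly (1%:P + 'X^1).
  by apply: nonneg_D; [apply: nonneg_C | apply: nonneg_Xn].
have G00 : (1%:P + 'X^1 : {poly int}) != 0.
  apply/eqP => h; have := congr1 (fun p : {poly int} => p`_0) h.
  by rewrite coefD coefC coefXn coef0.
have l0 : 0 < 1 - r ^+ 2.
  by rewrite subr_gt0 expr_lt1 // ltW.
apply: (@finish b (1%:P + 'X^1) 2 0 1) => //.
apply: (@rep R q sq r s _ 0 1 (1 - r ^+ 2) (1 - r ^+ 2)) => //.
- by rewrite sr -subr_eq0 opprK gt_eqF // addr_gt0.
- rewrite !(evalR_Xn, evalR_M, evalR_D, evalR_B, evalR_N, evalR_1, evalR_C, evalR_X).
  by rewrite !expr0 !expr1; ring.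
- rewrite !(evalR_Xn, evalR_M, evalR_D, evalR_B, evalR_N, evalR_1, evalR_C, evalR_X) sr.
  by rewrite !expr0 !expr1; ring.
- rewrite !expr0 !expr1 mulr1 mul1r sr -subr_eq0 -opprD oppr_eq0 gt_eqF //.
  by rewrite addr_gt0.
Qed.

Lemma case_a (b b' : R) : evalR q b = 0 -> evalR q b' = 0 -> b != b' -> b < 0 -> b' < 0 ->
  goodGH b.
Proof.
move=> hb hb' bb b0 b0'.
have hb0 := hb; have hb0' := hb'.
rewrite /evalR horner3 // in hb. rewrite /evalR horner3 // in hb'.
set q0 := (q`_0)%:~R : R in hb hb'. set q1 := (q`_1)%:~R : R in hb hb'.
set q2 := (q`_2)%:~R : R in hb hb'.
have h1 : q1 = - q2 * (b + b').
  have : (b - b') * (q1 + q2 * (b + b')) = 0.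
    transitivity ((q0 + q1 * b + q2 * b ^+ 2) - (q0 + q1 * b' + q2 * b' ^+ 2)); first ring.
    by rewrite hb hb' subrr.
  move/eqP; rewrite mulf_eq0 subr_eq0 (negbTE bb) /= addr_eq0 => /eqP ->; ring.
have h0 : q0 = q2 * b * b'.
  apply/eqP; rewrite -subr_eq0; apply/eqP.
  transitivity (q0 + q1 * b + q2 * b ^+ 2); last exact: hb.
  rewrite h1; ring.
have sb : 0 < b * b' by nra.
have sb' : 0 < - (b + b') by lra.
have q20 : q`_2 != 0 by exact: q2_neq0.
pose Gq := if 0 < q`_2 then q else - q.
have hsg : forall i, (i < 3)%N -> 0 < Gq`_i.
  move=> i hi; rewrite /Gq; case: ifP => hq2.
  - move: hi; case: i => [|[|[|]]] // _.
    + by rewrite -(ltr0z R) -/q0 h0 -mulrA mulr_gt0 // ltr0z.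
    + by rewrite -(ltr0z R) -/q1 h1 mulNr -mulrN mulr_gt0 // ltr0z.
  - have hq2' : q`_2 < 0 by rewrite lt_neqAle q20 /= leNgt hq2.
    move: hi; case: i => [|[|[|]]] // _; rewrite coefN oppr_gt0.
    + by rewrite -(ltrz0 R) -/q0 h0 -mulrA pmulr_llt0 // ltrz0.
    + by rewrite -(ltrz0 R) -/q1 h1 mulNr -mulrN pmulr_llt0 // ltrz0.
    + by [].
exists Gq, 0, 1%N; split => //.
- move=> i; case: (ltnP i 3) => hi; first by rewrite ltW // hsg.
  by rewrite nth_default // /Gq; case: ifP => _; rewrite ?size_polyN sq.
- exact: nonneg_0.
- by apply/eqP => h; have := hsg 2%N isT; rewrite h coef0 ltxx.
- have -> : evalR Gq b = 0 by rewrite /Gq; case: ifP => _; rewrite ?evalR_N hb0 ?oppr0.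
  by rewrite mulr0 add0r /evalR rmorph0 horner0.
Qed.

Lemma good_of (r s : R) : evalR q r = 0 -> evalR q s = 0 -> 0 < r -> r < 1 -> s < r ->
  s != 0 -> forall b, evalR q b = 0 -> goodGH b.
Proof.
move=> hr hs r0 r1 sr s0 b hb.
have [h|h|h] := ltgtP (s ^+ 2) (r ^+ 2).
- exact: (@case_bc r s hr hs r0 r1 sr s0 h b hb).
- exact: (@case_d r s hr hs r0 r1 sr h b hb).
- apply: (@case_e r s hr hs r0 r1 _ b hb).
  have : (s - r) * (s + r) = 0 by rewrite -subr_sqr h subrr.
  move/eqP; rewrite mulf_eq0 subr_eq0 (lt_eqF sr) /= addr_eq0 => /eqP //.
Qed.
End Cases.

Theorem theorem1 (R : realType) (q : {poly int}) (beta beta' : R) :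
  size q = 3%N ->
  irreducible_poly (map_poly (fun z : int => z%:~R) q : {poly rat}) ->
  evalR q beta = 0 -> evalR q beta' = 0 -> beta' != beta ->
  ((forall alpha : R, partition_finite beta alpha) <-> (1 < beta \/ 1 < beta')).
Proof.
move=> sq hirr hb hb' bb; split; last first.
  move=> [h|h] alpha; first exact: (@finite_gt1 R beta alpha h).
  case: (pselect (exists F0, nonneg_poly F0 /\ evalR F0 beta = alpha)) => [[F0 [hF0 hF0a]]|hno].
    have [s hs] := @finite_gt1 R beta' (evalR F0 beta') h.
    exists s => F hF hFa; apply: hs => //.
    by apply: (@transfer R q sq hirr beta beta' F F0 hb hb'); rewrite hFa hF0a.
  by exists [::] => F hF hFa; exfalso; apply: hno; exists F.
move=> hall.
have [h1|h1] := ltrP 1 beta; first by left.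
have [h2|h2] := ltrP 1 beta'; first by right.
exfalso.
have nr : forall g : R, evalR q g = 0 -> g != 0 /\ g != 1.
  move=> g hg; split; apply/eqP => hg0.
  - have := @irrat R q sq g 0 1 hirr hg; rewrite hg0 mulr0 addr0 => /(_ erefl) [_].
    by [].
  - have := @irrat R q sq g (-1) 1 hirr hg; rewrite hg0 mulr1 addNr => /(_ erefl) [].
    by [].
have [n0 n1] := nr _ hb. have [n0' n1'] := nr _ hb'.
have b1 : beta < 1 by rewrite lt_neqAle n1 h1.
have b1' : beta' < 1 by rewrite lt_neqAle n1' h2.
suff : @goodGH R beta.
  move=> [G [H [j [hG hH G0 j0 heq]]]].
  exact: (@infinite_family R beta G H j hG hH G0 j0 heq (hall (evalR G beta))).
have [bn|bp] := ltrP beta 0.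
  have [bn'|bp'] := ltrP beta' 0.
    by apply: (@case_a R q sq beta beta' hb hb'); rewrite // eq_sym.
  have bp'' : 0 < beta' by rewrite lt_neqAle eq_sym n0'.
  apply: (@good_of R q sq beta' beta hb' hb) => //; exact: lt_trans bn bp''.
have bp'' : 0 < beta by rewrite lt_neqAle eq_sym n0.
have [bl|bg] := ltrP beta' beta.
  by apply: (@good_of R q sq beta beta' hb hb') => //.
have bl : beta < beta' by rewrite lt_neqAle eq_sym bb.
apply: (@good_of R q sq beta' beta hb' hb) => //; exact: lt_trans bp'' bl.
Qed.
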